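(* Let $M$ be a left $H$-module with action $\triangleright$, and let $T\in\mathrm{End}_k(M)$ be a linear projection ($T^2=T$) such that $T_h\circ T=T\circ T_h$ for all $h\in H$, where $T_h(m)=h_{(1)}\triangleright T(S(h_{(2)})\triangleright m)$. Then the linear map $\pi:H\to\mathrm{End}_k(T(M))$, $\pi(h)(m)=T(h\triangleright m)$ for $m\in T(M)$, is a partial representation of $H$. Thus $(T(M),\pi)$ is a partial $H$-module.
   Context: Throughout, $k$ is a field and $H$ is a Hopf algebra over $k$ with bijective antipode $S$ and Sweedler notation $\Delta(h)=h_{(1)}\otimes h_{(2)}$. A partial representation of $H$ on a vector space $V$ is a linear map $\pi:H\to\mathrm{End}_k(V)$ satisfying, for all $h,k\in H$: - $\pi(1_H)=\mathrm{id}_V$; - $\pi(h)\pi(k_{(1)})\pi(S(k_{(2)}))=\pi(hk_{(1)})\pi(S(k_{(2)}))$; - $\pi(h_{(1)})\pi(S(h_{(2)}))\pi(k)=\pi(h_{(1)})\pi(S(h_{(2)})k)$; - $\pi(h)\pi(S(k_{(1)}))\pi(k_{(2)})=\pi(hS(k_{(1)}))\pi(k_{(2)})$; - $\pi(S(h_{(1)}))\pi(h_{(2)})\pi(k)=\pi(S(h_{(1)}))\pi(h_{(2)}k)$. *)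

(* Defs.v *)
From HB Require Import structures.
From mathcomp Require Import all_boot all_order all_algebra.
Set Implicit Arguments. Unset Strict Implicit. Unset Printing Implicit Defensive.
Import GRing.Theory.
Local Open Scope ring_scope.

Definition bilin (k : fieldType) (A B : lmodType k) (V : lmodType k)
    (f : A -> B -> V) : Prop :=
  (forall (a : k) x y z, f (a *: x + y) z = a *: f x z + f y z) /\
  (forall (a : k) x y z, f x (a *: y + z) = a *: f x y + f x z).

Definition trilin (k : fieldType) (A : lmodType k) (V : lmodType k)
    (f : A -> A -> A -> V) : Prop :=
  (forall (a : k) x y z w, f (a *: x + y) z w = a *: f x z w + f y z w) /\
  (forall (a : k) x y z w, f z (a *: x + y) w = a *: f z x w + f z y w) /\
  (forall (a : k) x y z w, f z w (a *: x + y) = a *: f z w x + f z w y).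

(* The coproduct Delta(h) in H (x) H is represented by a finite list
   [cop h] of pairs (h1, h2) with Delta(h) = sum h1 (x) h2 (Sweedler).
   Equalities in H (x) H (resp. H (x) H (x) H) are expressed via the
   universal property: they are tested against all bilinear (resp.
   trilinear) maps into all k-vector spaces V. *)
Record hopf_axioms (k : fieldType) (H : algType k)
    (cop : H -> seq (H * H)) (eps : H -> k) (S : H -> H) : Prop := {
  cop_linear : forall (V : lmodType k) (f : H -> H -> V), bilin f ->
    forall (a : k) x y,
      \sum_(p <- cop (a *: x + y)) f p.1 p.2 =
      a *: (\sum_(p <- cop x) f p.1 p.2) + \sum_(p <- cop y) f p.1 p.2;
  cop_coassoc : forall (V : lmodType k) (f : H -> H -> H -> V), trilin f ->
    forall h,
      \sum_(p <- cop h) \sum_(q <- cop p.1) f q.1 q.2 p.2 =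
      \sum_(p <- cop h) \sum_(q <- cop p.2) f p.1 q.1 q.2;
  cop_mul : forall (V : lmodType k) (f : H -> H -> V), bilin f ->
    forall x y,
      \sum_(p <- cop (x * y)) f p.1 p.2 =
      \sum_(p <- cop x) \sum_(q <- cop y) f (p.1 * q.1) (p.2 * q.2);
  cop_one : forall (V : lmodType k) (f : H -> H -> V), bilin f ->
      \sum_(p <- cop 1) f p.1 p.2 = f 1 1;
  eps_linear : forall (a : k) x y, eps (a *: x + y) = a * eps x + eps y;
  eps_mul : forall x y, eps (x * y) = eps x * eps y;
  eps_one : eps 1 = 1;
  counit_l : forall h, \sum_(p <- cop h) eps p.1 *: p.2 = h;
  counit_r : forall h, \sum_(p <- cop h) eps p.2 *: p.1 = h;
  S_linear : forall (a : k) x y, S (a *: x + y) = a *: S x + S y;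
  antipode_l : forall h, \sum_(p <- cop h) S p.1 * p.2 = eps h *: 1;
  antipode_r : forall h, \sum_(p <- cop h) p.1 * S p.2 = eps h *: 1;
  S_bij : bijective S
}.

Record lmod_action (k : fieldType) (H : algType k) (M : lmodType k)
    (act : H -> M -> M) : Prop := {
  act_linl : forall (a : k) x y m, act (a *: x + y) m = a *: act x m + act y m;
  act_linr : forall (a : k) x m n, act x (a *: m + n) = a *: act x m + act x n;
  act_one : forall m, act 1 m = m;
  act_mul : forall x y m, act (x * y) m = act x (act y m)
}.

Definition Tconj (k : fieldType) (H : algType k) (M : lmodType k)
    (cop : H -> seq (H * H)) (S : H -> H) (act : H -> M -> M)
    (T : M -> M) (h : H) (m : M) : M :=
  \sum_(p <- cop h) act p.1 (T (act (S p.2) m)).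

(* A partial representation of H on the subspace W = {v | P v} of V,
   given by pi : H -> (V -> V), where only the restrictions of pi h to W
   matter (so pi h is regarded as an element of End_k(W)). *)
Definition partial_rep_on (k : fieldType) (H : algType k) (V : lmodType k)
    (cop : H -> seq (H * H)) (S : H -> H)
    (P : V -> Prop) (pi : H -> V -> V) : Prop :=
  (forall h v, P v -> P (pi h v)) /\
  (forall h (a : k) v w, P v -> P w -> pi h (a *: v + w) = a *: pi h v + pi h w) /\
  (forall (a : k) x y v, P v -> pi (a *: x + y) v = a *: pi x v + pi y v) /\
  (forall v, P v -> pi 1 v = v) /\
  (forall h g v, P v ->
     \sum_(p <- cop g) pi h (pi p.1 (pi (S p.2) v)) =
     \sum_(p <- cop g) pi (h * p.1) (pi (S p.2) v)) /\
  (forall h g v, P v ->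
     \sum_(p <- cop h) pi p.1 (pi (S p.2) (pi g v)) =
     \sum_(p <- cop h) pi p.1 (pi (S p.2 * g) v)) /\
  (forall h g v, P v ->
     \sum_(p <- cop g) pi h (pi (S p.1) (pi p.2 v)) =
     \sum_(p <- cop g) pi (h * S p.1) (pi p.2 v)) /\
  (forall h g v, P v ->
     \sum_(p <- cop h) pi (S p.1) (pi p.2 (pi g v)) =
     \sum_(p <- cop h) pi (S p.1) (pi (p.2 * g) v)).

(* Main.v *)
Require Import Defs.
From HB Require Import structures.
From mathcomp Require Import all_boot all_order all_algebra.
Local Open Scope ring_scope.
Import GRing.Theory.

Lemma lin0 {k : fieldType} {A B : lmodType k} {f : A -> B}
  (hf : forall a x y, f (a *: x + y) = a *: f x + f y) : f 0 = 0.
Proof.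
have h := hf 1 0 0; rewrite scaler0 addr0 scale1r in h.
by apply: (addrI (f 0)); rewrite addr0 -h.
Qed.

Lemma linD {k : fieldType} {A B : lmodType k} {f : A -> B}
  (hf : forall a x y, f (a *: x + y) = a *: f x + f y) x y : f (x + y) = f x + f y.
Proof. by have h := hf 1 x y; rewrite !scale1r in h. Qed.

Lemma linZ {k : fieldType} {A B : lmodType k} {f : A -> B}
  (hf : forall a x y, f (a *: x + y) = a *: f x + f y) a x : f (a *: x) = a *: f x.
Proof. by have h := hf a x 0; rewrite !addr0 (lin0 hf) addr0 in h. Qed.

Lemma lin_sum {k : fieldType} {A B : lmodType k} {f : A -> B}
  (hf : forall a x y, f (a *: x + y) = a *: f x + f y) {I : Type} (s : seq I)
  (F : I -> A) : f (\sum_(i <- s) F i) = \sum_(i <- s) f (F i).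
Proof.
elim: s => [|i s IH]; first by rewrite !big_nil (lin0 hf).
by rewrite !big_cons (linD hf) IH.
Qed.

Theorem mainTheorem6 (k : fieldType) (H : algType k)
    (cop : H -> seq (H * H)) (eps : H -> k) (S : H -> H)
    (hH : hopf_axioms cop eps S)
    (M : lmodType k) (act : H -> M -> M) (hM : lmod_action act)
    (T : M -> M)
    (T_lin : forall (a : k) m n, T (a *: m + n) = a *: T m + T n)
    (T_idem : forall m, T (T m) = T m)
    (T_comm : forall h m, Tconj cop S act T h (T m) = T (Tconj cop S act T h m)) :
  partial_rep_on cop S (fun m : M => exists m0 : M, m = T m0)
    (fun h m => T (act h m)).
Proof.
case: hH => cop_lin coassoc _ _ _ _ _ cu_l cu_r S_lin ant_l ant_r _.
case: hM => actl actr act1 actM.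
have actlin h : forall a x y, act h (a *: x + y) = a *: act h x + act h y.
  by move=> a x y; rewrite actr.
have actlinl m : forall a x y, act (a *: x + y) m = a *: act x m + act y m.
  by move=> a x y; rewrite actl.
have Tact h : forall a x y, T (act h (a *: x + y)) = a *: T (act h x) + T (act h y).
  by move=> a x y; rewrite actr T_lin.
have TactT h : forall a x y, T (act h (T (a *: x + y))) = a *: T (act h (T x)) + T (act h (T y)).
  by move=> a x y; rewrite T_lin actr T_lin.
have Tconj_r h : forall a x y, Tconj cop S act T h (a *: x + y) =
    a *: Tconj cop S act T h x + Tconj cop S act T h y.
  move=> a x y; rewrite /Tconj.
  under eq_bigr => p _ do rewrite actr T_lin actr.
  by rewrite big_split /= scaler_sumr.
have Tconj_l m : forall a x y, Tconj cop S act T (a *: x + y) m =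
    a *: Tconj cop S act T x m + Tconj cop S act T y m.
  move=> a x y; rewrite /Tconj.
  apply: (cop_lin _ (fun u v => act u (T (act (S v) m)))); split=> a' x' y' z'.
    by rewrite actl.
  by rewrite S_lin actl T_lin actr.
have act_suml m (I : Type) (s : seq I) (F : I -> H) :
    act (\sum_(i <- s) F i) m = \sum_(i <- s) act (F i) m :=
  @lin_sum _ _ _ (fun u => act u m) (actlinl m) I s F.
have act_sumr h (I : Type) (s : seq I) (F : I -> M) :
    act h (\sum_(i <- s) F i) = \sum_(i <- s) act h (F i) :=
  @lin_sum _ _ _ (act h) (actlin h) I s F.
have T_sum (I : Type) (s : seq I) (F : I -> M) :
    T (\sum_(i <- s) F i) = \sum_(i <- s) T (F i) :=
  @lin_sum _ _ _ T T_lin I s F.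
have S_sum (I : Type) (s : seq I) (F : I -> H) :
    S (\sum_(i <- s) F i) = \sum_(i <- s) S (F i) :=
  @lin_sum _ _ _ S S_lin I s F.
have actZ m a x : act (a *: x) m = a *: act x m :=
  @linZ _ _ _ (fun u => act u m) (actlinl m) a x.
have actZr h a x : act h (a *: x) = a *: act h x :=
  @linZ _ _ _ (act h) (actlin h) a x.
have T_Z a x : T (a *: x) = a *: T x := @linZ _ _ _ T T_lin a x.
have S_Z a x : S (a *: x) = a *: S x := @linZ _ _ _ S S_lin a x.
have S1 h y : T (act (S h) y) =
    \sum_(q <- cop h) act (S q.1) (Tconj cop S act T q.2 y).
  rewrite /Tconj.
  transitivity (\sum_(q <- cop h) \sum_(r <- cop q.2)
      act (S q.1 * r.1) (T (act (S r.2) y))); last first.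
    by apply: eq_bigr => q _; rewrite act_sumr; apply: eq_bigr => r _; rewrite actM.
  rewrite -(coassoc _ (fun a b c => act (S a * b) (T (act (S c) y)))); last first.
    split; [|split] => a' x' y' z' w' /=.
    - by rewrite S_lin mulrDl -scalerAl actl.
    - by rewrite mulrDr -scalerAr actl.
    - by rewrite S_lin actl T_lin actr.
  transitivity (\sum_(q <- cop h) act ((eps q.1) *: 1) (T (act (S q.2) y))); last first.
    by apply: eq_bigr => q _; rewrite -ant_l act_suml.
  under eq_bigr => q _ do rewrite actZ act1.
  rewrite -{1}(cu_l h) S_sum act_suml T_sum; apply: eq_bigr => q _.
  by rewrite S_Z actZ T_Z.
have S2 h y : \sum_(q <- cop h) Tconj cop S act T q.1 (act q.2 y) = act h (T y).
  rewrite /Tconj.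
  transitivity (\sum_(q <- cop h) \sum_(r <- cop q.1)
      act r.1 (T (act (S r.2 * q.2) y))).
    by apply: eq_bigr => q _; apply: eq_bigr => r _; rewrite actM.
  rewrite (coassoc _ (fun a b c => act a (T (act (S b * c) y)))); last first.
    split; [|split] => a' x' y' z' w' /=.
    - by rewrite actl.
    - by rewrite S_lin mulrDl -scalerAl actl T_lin actr.
    - by rewrite mulrDr -scalerAr actl T_lin actr.
  transitivity (\sum_(q <- cop h) act q.1 (T (act ((eps q.2) *: 1) y))).
    by apply: eq_bigr => q _; rewrite -ant_l act_suml T_sum act_sumr.
  under eq_bigr => q _ do rewrite actZ act1 T_Z actZr.
  rewrite -[X in _ = act X _](cu_r h) act_suml; apply: eq_bigr => q _.
  by rewrite actZ.
have K g x : \sum_(p <- cop g) T (act (S p.1) (T (act p.2 x))) =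
    \sum_(p <- cop g) act (S p.1) (T (act p.2 (T x))).
  transitivity (\sum_(p <- cop g) \sum_(q <- cop p.1)
      act (S q.1) (T (Tconj cop S act T q.2 (act p.2 x)))).
    by apply: eq_bigr => p _; rewrite S1; apply: eq_bigr => q _; rewrite T_comm.
  rewrite (coassoc _ (fun a b c => act (S a) (T (Tconj cop S act T b (act c x))))); last first.
    split; [|split] => a' x' y' z' w' /=.
    - by rewrite S_lin actl.
    - by rewrite Tconj_l T_lin actr.
    - by rewrite actl Tconj_r T_lin actr.
  by apply: eq_bigr => p _; rewrite -(S2 p.2 x) T_sum act_sumr.
split.
  by move=> h v _; exists (act h v).
split.
  by move=> h a v w _ _; rewrite actr T_lin.
split.
  by move=> a x y v _; rewrite actl T_lin.
split.
  by move=> v [m0 ->]; rewrite act1 T_idem.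
split.
  move=> h g v [m0 ->].
  transitivity (T (act h (T (Tconj cop S act T g (T m0))))).
    by rewrite /Tconj T_sum act_sumr T_sum.
  rewrite T_comm T_idem -T_comm /Tconj act_sumr T_sum; apply: eq_bigr => p _.
  by rewrite actM.
split.
  move=> h g v _.
  transitivity (T (Tconj cop S act T h (T (act g v)))).
    by rewrite /Tconj T_sum.
  rewrite T_comm T_idem /Tconj T_sum; apply: eq_bigr => p _.
  by rewrite actM.
split.
  move=> h g v [m0 ->].
  transitivity (T (act h (T (\sum_(p <- cop g) act (S p.1) (T (act p.2 (T m0))))))).
    by rewrite T_sum act_sumr T_sum.
  rewrite -K T_sum.
  under eq_bigr => p _ do rewrite T_idem.
  rewrite K act_sumr T_sum; apply: eq_bigr => p _.
  by rewrite actM.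
move=> h g v _.
rewrite K.
under eq_bigr => p _ do rewrite T_idem.
rewrite -K; apply: eq_bigr => p _.
by rewrite actM.
Qed.
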